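(* Let $G$ be a finite solvable group, $N$ an abelian normal subgroup of $G$, $a\in G$, $C=\mathbf{C}_G(a)$, and $C_N=\{g\in G\mid [a,g]\in N\}$ (a subgroup of $G$ containing $C$). Then $$\operatorname{dl}\big(C_N/\operatorname{core}_{C_N}(C)\big)\le \operatorname{dl}\big(C_N/(C_N\cap\mathbf{C}_G(N))\big)+1.$$ If in addition $N$ is cyclic, then $\operatorname{dl}\big(C_N/\operatorname{core}_{C_N}(C)\big)\le 2$.
   Context: $[x,g]=x^{-1}g^{-1}xg$. $\mathbf{C}_G(a)$ is the centralizer of $a$ and $\mathbf{C}_G(N)$ the centralizer of the subgroup $N$. For a subgroup $K$ of a group $L$, $\operatorname{core}_L(K)=\bigcap_{l\in L}l^{-1}Kl$. $\operatorname{dl}$ denotes derived length. *)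

(* Defs.v *)
From mathcomp Require Import all_boot all_fingroup all_solvable.
Set Implicit Arguments. Unset Strict Implicit. Unset Printing Implicit Defensive.
Local Open Scope group_scope.

(* Derived length of a finite group A: the least n with A^`(n) = 1.
   (For a finite solvable group such n exists and is <= #|A|; the search
   range iota 0 #|A|.+1 therefore always finds it.) *)
Definition dl (gT : finGroupType) (A : {set gT}) : nat :=
  find (fun n => A^`(n) == 1) (iota 0 #|A|.+1).

(* Main.v *)
Require Import Defs.
From mathcomp Require Import all_boot all_fingroup all_solvable.
Local Open Scope group_scope.

Lemma dl_le (gT : finGroupType) (A : {set gT}) m : A^`(m) = 1 -> (dl A <= m)%N.
Proof.
move=> Am; rewrite /dl leqNgt; apply/negP => lt.
have ls : (m < size (iota 0 #|A|.+1))%N.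
  by apply: leq_trans lt (find_size _ _).
have := before_find 0%N lt; rewrite nth_iota; last by rewrite size_iota in ls.
by rewrite add0n Am eqxx.
Qed.

Lemma dl_spec (gT : finGroupType) (A : {group gT}) : solvable A -> A^`(dl A) = 1.
Proof.
move=> solA.
have key : forall k, A^`(k) = 1 \/ (#|A^`(k)| + k <= #|A|)%N.
  elim=> [|k IH]; first by right; rewrite addn0.
  have [E|ntk] := eqVneq (A^`(k) : {set gT}) 1.
    by left; rewrite dergSn E commG1.
  case: IH => [E|IH]; first by rewrite E eqxx in ntk.
  right; have pr := sol_der1_proper solA (der_sub k A) ntk.
  have c : (#|A^`(k.+1)| < #|A^`(k)|)%N := proper_card pr.
  by rewrite addnS; apply: leq_trans IH; rewrite ltn_add2r.
have hA : has (fun n => A^`(n) == 1) (iota 0 #|A|.+1).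
  apply/hasP; exists #|A|; first by rewrite mem_iota /= add0n ltnS leqnn.
  case: (key #|A|) => [->//|].
  have := cardG_gt0 [group of A^`(#|A|)]; rewrite /= => p c.
  by have := leq_trans (leq_add p (leqnn #|A|)) c; rewrite add1n ltnn.
have := nth_find 0%N hA; rewrite /dl nth_iota ?add0n; first by move/eqP.
by rewrite -{2}(size_iota 0 #|A|.+1) -has_find.
Qed.

Lemma conj_swap (gT : finGroupType) (N : {group gT}) (a u v : gT) :
  abelian N -> [~ a, u] \in N -> [~ a, v] \in N -> u \in 'C(N) -> v \in 'C(N) ->
  a ^ (u * v) = a ^ (v * u).
Proof.
move=> abN nu nv cu cv.
have e1 : [~ a, u] ^ v = [~ a, u].
  by apply/conjg_fixP/commgP; apply: commute_sym; apply: (centP cv).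
have e2 : [~ a, v] ^ u = [~ a, v].
  by apply/conjg_fixP/commgP; apply: commute_sym; apply: (centP cu).
have c12 : commute [~ a, u] [~ a, v] by apply: (centP (subsetP abN _ nu)).
rewrite !conjgM [a ^ u]conjg_mulR [a ^ v]conjg_mulR.
move: e1 e2 c12; set nu' := [~ a, u]; set nv' := [~ a, v] => e1 e2 c12.
have eu : a ^ u = a * nu' by rewrite conjg_mulR.
have ev : a ^ v = a * nv' by rewrite conjg_mulR.
clearbody nu' nv'.
rewrite !conjMg e1 e2 eu ev.
by rewrite -!mulgA c12.
Qed.

Arguments conj_swap {gT N a u v}.
Arguments dl_spec {gT A}.
Arguments dl_le {gT A m}.

Theorem lemma4p4 (gT : finGroupType) (G N CN : {group gT}) (a : gT) :
  solvable G -> N <| G -> abelian N -> a \in G ->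
  CN :=: [set g in G | [~ a, g] \in N] ->
  (dl (CN / gcore 'C_G[a] CN) <= dl (CN / (CN :&: 'C_G(N))) + 1)%N /\
  (cyclic N -> (dl (CN / gcore 'C_G[a] CN) <= 2)%N).
Proof.
move=> solG nNG abN aG defCN.
have memCN : forall x, x \in CN -> x \in G /\ [~ a, x] \in N.
  by move=> x; rewrite defCN inE => /andP[].
have sCNG : CN \subset G by apply/subsetP => x /memCN[].
set D := (CN :&: 'C_G(N))%G.
set K := gcore 'C_G[a] CN.
have nDCN : CN \subset 'N(D).
  rewrite normsI ?normG //; apply: subset_trans sCNG _.
  by rewrite normsI ?normG // norms_cent // normal_norm.
have nKCN : CN \subset 'N(K) by apply: gcore_norm.
have DK : D^`(1) \subset K.
  rewrite sub_gcore; last exact: char_norm_trans (der_char 1 D) nDCN.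
  rewrite derg1 /commg gen_subG; apply/subsetP => _ /imset2P[x y Dx Dy ->].
  move/setIP: Dx => [CNx /setIP[Gx cx]]; move/setIP: Dy => [CNy /setIP[Gy cy]].
  rewrite inE groupR //=; apply/cent1P; apply: commute_sym; apply/commgP/conjg_fixP.
  have [_ nx] := memCN _ (groupVr CNx).
  have [_ ny] := memCN _ (groupVr CNy).
  have e := conj_swap abN nx ny (groupVr cx) (groupVr cy).
  rewrite (_ : [~ x, y] = (x^-1 * y^-1) * (x * y)); last by rewrite /commg !mulgA.
  by rewrite conjgM e -conjgM -mulgA (mulKg x) mulVg conjg1.
have step : forall n, CN^`(n) \subset D -> (dl (CN / K) <= n + 1)%N.
  move=> n sD; apply: dl_le; rewrite -quotient_der //; apply/trivgP.
  rewrite quotient_sub1; last exact: subset_trans (der_sub _ _) nKCN.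
  by apply: subset_trans DK; rewrite addn1 /= dergSn derg1 commgSS.
split.
  apply: step; rewrite -quotient_sub1; last exact: subset_trans (der_sub _ _) nDCN.
  rewrite quotient_der // (dl_spec (quotient_sol D (solvableS sCNG solG))).
  exact: subxx.
move=> cycN; apply: (step 1%N).
rewrite subsetI der_sub subsetI (subset_trans (der_sub _ _) sCNG) /=.
have nNCN : CN \subset 'N(N) by apply: subset_trans sCNG (normal_norm nNG).
rewrite -ker_conj_aut ker_trivg_morphim (subset_trans (der_sub _ _) nNCN) /=.
rewrite morphim_der // derg1; apply/trivgP/commG1P.
exact: abelianS (Aut_conj_aut _ _) (Aut_cyclic_abelian cycN).
Qed.
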